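(* Let $(e_i)$ denote the canonical basis of $\ell_1$, and for $n\in\mathbb{N}$ let $x_n=e_n-\tfrac12(e_{2n+1}+e_{2n+2})$. For each $n$, let $x^{(n)}_1,\dots,x^{(n)}_n$ be the copies of $x_1,\dots,x_n$ (which lie in $\ell_1^{2n+2}$) inside the $n$-th summand of the Banach lattice $Y=\big(\sum_{n}\ell_1^{2n+2}\big)_{\ell_1}$ (with its coordinatewise order). Then the sequence $\big(x^{(n)}_i\big)_{1\le i\le n,\,n\in\mathbb{N}}$, ordered by $n$ first and then by $i$, is neither uniformly quasi-greedy nor bibasic in $Y$.
   Context: A sequence $(x_k)$ of nonzero vectors in a Banach lattice is bibasic if there is $M\ge1$ with $\|\bigvee_{n=1}^m|\sum_{k=1}^na_kx_k|\|\le M\|\sum_{k=1}^ma_kx_k\|$ for all $m$ and scalars $a_k$. A semi-normalized basic sequence $(x_k)$ with span $E$ and biorthogonal functionals $x_k^*$ is uniformly quasi-greedy if $\sup_m\sup_{x\in E,\|x\|=1}\|\bigvee_{n=1}^m|\mathcal{G}_n(x)|\|<\infty$, where $\mathcal{G}_n(x)=\sum_{j=1}^n x^*_{\rho(j)}(x)x_{\rho(j)}$ and $\rho$ is the natural greedy ordering of $x$ (indices listed by non-increasing $|x_k^*(x)|$, ties broken by increasing index). (The sequence $(x^{(n)}_i)$ is known to be a semi-normalized quasi-greedy basic sequence in $Y$.) *)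

(* Defs.v *)
From Stdlib Require Import Reals Lra Lia.
From Coquelicot Require Import Coquelicot.
Open Scope R_scope.

(** * The Banach lattice Y = (sum_n l_1^{2n+2})_{l_1}
    A vector of Y is a function [f : nat -> nat -> R]; [f n j] is the
    j-th coordinate (1 <= j <= 2n+2) of the n-th summand (n >= 1). *)
Definition Yvec := nat -> nat -> R.

(** l_1-norm of the n-th block (j ranges over 0..2n+2; coordinate 0 vanishes). *)
Definition blocknorm (f : Yvec) (n : nat) : R :=
  sum_f_R0 (fun j => Rabs (f n j)) (2 * n + 2).

Definition inY (f : Yvec) : Prop :=
  (forall n j, (n = 0%nat \/ j = 0%nat \/ (2 * n + 2 < j)%nat) -> f n j = 0)
  /\ ex_series (blocknorm f).

(** The norm of Y (meaningful on elements of Y). *)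
Definition normY (f : Yvec) : R := Series (blocknorm f).

Definition subY (f g : Yvec) : Yvec := fun n j => f n j - g n j.

(** Lattice operations are coordinatewise:
    [maxupto F m] = \/_{n=1}^m |F n|  (and 0 for m = 0). *)
Fixpoint maxupto (F : nat -> Yvec) (m : nat) : Yvec :=
  match m with
  | O => fun _ _ => 0
  | S m' => fun p q => Rmax (maxupto F m' p q) (Rabs (F (S m') p q))
  end.

Fixpoint lincomb (c : nat -> R) (v : nat -> Yvec) (N : nat) : Yvec :=
  match N with
  | O => fun _ _ => 0
  | S N' => fun p q => lincomb c v N' p q + c N' * v N' p q
  end.

Definition xcopy (n i : nat) : Yvec :=
  fun m j =>
    if Nat.eqb m n then
      (if Nat.eqb j i then 1
       else if (Nat.eqb j (2 * i + 1) || Nat.eqb j (2 * i + 2))%bool then - (1/2)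
       else 0)
    else 0.

(** Enumeration of the pairs (n, i), 1 <= i <= n, n >= 1, ordered by n
    first and then by i: (1,1), (2,1), (2,2), (3,1), ... *)
Fixpoint dec (k : nat) : nat * nat :=
  match k with
  | O => (1%nat, 1%nat)
  | S k' => let '(n, i) := dec k' in
            if Nat.ltb i n then (n, S i) else (S n, 1%nat)
  end.

(** The sequence (x^{(n)}_i), indexed from 0. *)
Definition useq (k : nat) : Yvec := let '(n, i) := dec k in xcopy n i.

Definition bibasic (x : nat -> Yvec) : Prop :=
  (forall k, exists p q, x k p q <> 0) /\
  exists M : R, 1 <= M /\
    forall (m : nat) (a : nat -> R),
      normY (maxupto (fun n => lincomb a x n) m) <= M * normY (lincomb a x m).

(** [a] is the coefficient sequence (x_k^*(xv))_k of [xv] in the closed span: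
    xv = sum_k a_k x_k, the series converging in Y. *)
Definition expansion (x : nat -> Yvec) (a : nat -> R) (xv : Yvec) : Prop :=
  inY xv /\ is_lim_seq (fun N => normY (subY xv (lincomb a x N))) 0.

Definition greedy_ordering (a : nat -> R) (rho : nat -> nat) : Prop :=
  (forall i j, rho i = rho j -> i = j) /\
  (forall k, a k <> 0 -> exists j, rho j = k) /\
  (forall i j, (i < j)%nat ->
     Rabs (a (rho j)) < Rabs (a (rho i)) \/
     (Rabs (a (rho j)) = Rabs (a (rho i)) /\ (rho i < rho j)%nat)).

Definition greedy_sum (x : nat -> Yvec) (a : nat -> R) (rho : nat -> nat) (n : nat)
  : Yvec := lincomb (fun j => a (rho j)) (fun j => x (rho j)) n.

Definition uniformly_quasi_greedy (x : nat -> Yvec) : Prop :=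
  exists C : R, forall (a : nat -> R) (xv : Yvec) (rho : nat -> nat) (m : nat),
    expansion x a xv -> normY xv = 1 -> greedy_ordering a rho ->
    normY (maxupto (greedy_sum x a rho) m) <= C.

(* Main.v *)
Require Import Defs.
From Stdlib Require Import Reals Lra Lia.
From Coquelicot Require Import Coquelicot.
Open Scope R_scope.



Fixpoint T (n : nat) : nat := match n with O => O | S n' => (T n' + n')%nat end.

Lemma dec_S k : dec (S k) = let '(n, i) := dec k in if Nat.ltb i n then (n, S i) else (S n, 1%nat).
Proof. reflexivity. Qed.

Lemma dec_T (n : nat) : forall i, (i < S n)%nat -> dec (T (S n) + i) = (S n, S i).
Proof.
  induction n as [|n IHn]; intros i; induction i as [|i IH]; intros Hi.
  - reflexivity.
  - lia.
  - assert (E : (T (S (S n)) + 0 = S (T (S n) + n))%nat) by (simpl; lia).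
    rewrite E; rewrite dec_S, IHn by lia.
    destruct (Nat.ltb_spec (S n) (S n)); [lia| reflexivity].
  - replace (T (S (S n)) + S i)%nat with (S (T (S (S n)) + i)) by lia.
    rewrite dec_S, IH by lia.
    destruct (Nat.ltb_spec (S i) (S (S n))); [reflexivity| lia].
Qed.

Lemma dec_range k : (1 <= snd (dec k) <= fst (dec k))%nat.
Proof.
  induction k as [|k IH]; simpl; [lia|].
  destruct (dec k) as [n i]; simpl in *.
  destruct (Nat.ltb_spec i n); simpl; lia.
Qed.

Lemma xcopy_supp n i p q : (1 <= i <= n)%nat -> xcopy n i p q <> 0 ->
  p = n /\ (1 <= q <= 2 * p + 2)%nat.
Proof.
  intros Hi H; unfold xcopy in H.
  destruct (Nat.eqb_spec p n); [|lra]. split; [auto|].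
  destruct (Nat.eqb_spec q i); [lia|].
  destruct (Nat.eqb_spec q (2*i+1)); [lia|].
  destruct (Nat.eqb_spec q (2*i+2)); [lia|]. simpl in H; lra.
Qed.

Lemma useq_supp k p q : useq k p q <> 0 -> (1 <= p)%nat /\ (1 <= q <= 2 * p + 2)%nat.
Proof.
  unfold useq. pose proof (dec_range k) as HR. destruct (dec k) as [n i]; simpl in HR.
  intros H; apply xcopy_supp in H; [lia|exact HR].
Qed.

Lemma lincomb_supp a N p q : lincomb a useq N p q <> 0 -> (1 <= p)%nat /\ (1 <= q <= 2 * p + 2)%nat.
Proof.
  induction N as [|N IH]; simpl; intros H; [lra|].
  destruct (Req_dec (lincomb a useq N p q) 0) as [E|E]; [|auto].
  destruct (Req_dec (useq N p q) 0) as [E'|E']; [rewrite E, E' in H; lra|].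
  apply useq_supp in E'; auto.
Qed.

Lemma useq_T b i : (1 <= b)%nat -> (i < b)%nat -> useq (T b + i) = xcopy b (S i).
Proof.
  intros Hb Hi. destruct b as [|n]; [lia|]. unfold useq. rewrite dec_T by lia. reflexivity.
Qed.



Definition r (k : nat) : R := / INR (k + 1).
Lemma r_def k : r k = / INR (k + 1).
Proof. reflexivity. Qed.
Global Opaque r.

Definition c (b k : nat) : R :=
  if (Nat.leb (T b) k && Nat.ltb k (T b + b))%bool then r (S (k - T b)) else 0.

Lemma lincomb_S a v N p q : lincomb a v (S N) p q = lincomb a v N p q + a N * v N p q.
Proof. reflexivity. Qed.

Lemma c_T b i : (i < b)%nat -> c b (T b + i) = r (S i).
Proof.
  intros H; unfold c. destruct (Nat.leb_spec (T b) (T b + i)); [|lia].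
  destruct (Nat.ltb_spec (T b + i) (T b + b)); [|lia]. simpl.
  f_equal; f_equal; lia.
Qed.

Lemma c_out b k : (k < T b \/ T b + b <= k)%nat -> c b k = 0.
Proof.
  intros H; unfold c. destruct (Nat.leb_spec (T b) k), (Nat.ltb_spec k (T b + b)); simpl; auto; lia.
Qed.

Lemma lincomb_below b x N p q : (N <= T b)%nat -> lincomb (c b) x N p q = 0.
Proof.
  induction N as [|N IH]; simpl; intros H; [reflexivity|].
  rewrite IH by lia. rewrite c_out by lia. ring.
Qed.

Lemma lincomb_above b x N p q : (T b + b <= N)%nat -> lincomb (c b) x N p q = lincomb (c b) x (T b + b) p q.
Proof.
  induction N as [|N IH]; intros H.
  - replace (T b + b)%nat with 0%nat by lia. reflexivity.
  - destruct (Nat.eq_dec (S N) (T b + b)) as [E|E]; [rewrite E; reflexivity|].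
    simpl. rewrite IH by lia. rewrite c_out by lia. ring.
Qed.

Lemma lincomb_off b N p q : (1 <= b)%nat -> p <> b -> lincomb (c b) useq N p q = 0.
Proof.
  intros Hb Hp. induction N as [|N IH]; simpl; [reflexivity|]. rewrite IH.
  destruct (Nat.lt_ge_cases N (T b)) as [H1|H1]; [rewrite c_out by lia; ring|].
  destruct (Nat.lt_ge_cases N (T b + b)) as [H2|H2]; [|rewrite c_out by lia; ring].
  replace N with (T b + (N - T b))%nat by lia. rewrite useq_T by lia.
  unfold xcopy. destruct (Nat.eqb_spec p b); [lia|]. ring.
Qed.

Lemma CF_odd b m i : (1 <= b)%nat -> (m <= b)%nat ->
  lincomb (c b) useq (T b + m) b (2*i+1)%nat =
  (if Nat.leb (2*i+1)%nat m then r (2*i+1)%nat else 0) -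
  (if (Nat.leb 1 i && Nat.leb i m)%bool then /2 * r i else 0).
Proof.
  intros Hb. induction m as [|m IH]; intros Hm.
  - rewrite lincomb_below by lia.
    destruct (Nat.leb_spec (2*i+1)%nat 0); [lia|].
    destruct (Nat.leb_spec 1 i), (Nat.leb_spec i 0); simpl; try lia; lra.
  - replace (T b + S m)%nat with (S (T b + m)) by lia. rewrite lincomb_S.
    rewrite IH by lia. rewrite c_T, useq_T by lia. unfold xcopy. rewrite Nat.eqb_refl.
    destruct (Nat.eqb_spec (2*i+1)%nat (S m));
    destruct (Nat.eqb_spec (2*i+1)%nat (2 * S m + 1));
    destruct (Nat.eqb_spec (2*i+1)%nat (2 * S m + 2)); cbn [orb andb];
    destruct (Nat.leb_spec (2*i+1)%nat m); destruct (Nat.leb_spec (2*i+1)%nat (S m));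
    destruct (Nat.leb_spec 1 i), (Nat.leb_spec i m), (Nat.leb_spec i (S m)); cbn [orb andb];
    try lia;
    first [ lra
        | replace (S m) with (2*i+1)%nat by lia; lra
        | replace (S m) with (2*i+2)%nat by lia; lra
        | replace (S m) with i by lia; lra ].
Qed.

Lemma CF_even b m i : (1 <= b)%nat -> (m <= b)%nat ->
  lincomb (c b) useq (T b + m) b (2*i+2)%nat =
  (if Nat.leb (2*i+2)%nat m then r (2*i+2)%nat else 0) -
  (if (Nat.leb 1 i && Nat.leb i m)%bool then /2 * r i else 0).
Proof.
  intros Hb. induction m as [|m IH]; intros Hm.
  - rewrite lincomb_below by lia.
    destruct (Nat.leb_spec (2*i+2)%nat 0); [lia|].
    destruct (Nat.leb_spec 1 i), (Nat.leb_spec i 0); simpl; try lia; lra.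
  - replace (T b + S m)%nat with (S (T b + m)) by lia. rewrite lincomb_S.
    rewrite IH by lia. rewrite c_T, useq_T by lia. unfold xcopy. rewrite Nat.eqb_refl.
    destruct (Nat.eqb_spec (2*i+2)%nat (S m));
    destruct (Nat.eqb_spec (2*i+2)%nat (2 * S m + 1));
    destruct (Nat.eqb_spec (2*i+2)%nat (2 * S m + 2)); cbn [orb andb];
    destruct (Nat.leb_spec (2*i+2)%nat m); destruct (Nat.leb_spec (2*i+2)%nat (S m));
    destruct (Nat.leb_spec 1 i), (Nat.leb_spec i m), (Nat.leb_spec i (S m)); cbn [orb andb];
    try lia;
    first [ lra
        | replace (S m) with (2*i+1)%nat by lia; lra
        | replace (S m) with (2*i+2)%nat by lia; lra
        | replace (S m) with i by lia; lra ].
Qed.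



Lemma r_pos k : 0 < r k.
Proof. rewrite r_def. apply Rinv_0_lt_compat, lt_0_INR. lia. Qed.

Lemma r_odd i : r (2*i+1)%nat = /2 * r i.
Proof.
  rewrite !r_def. replace (2*i+1+1)%nat with (2*(i+1))%nat by lia.
  rewrite mult_INR. simpl (INR 2). rewrite Rinv_mult. lra.
Qed.

Lemma sum_pairs (g : nat -> R) N :
  sum_f_R0 g (2*N+2) = g 0%nat + sum_f_R0 (fun i => g (2*i+1)%nat + g (2*i+2)%nat) N.
Proof.
  induction N as [|N IH].
  - simpl. lra.
  - replace (2 * S N + 2)%nat with (S (S (2*N+2))) by lia.
    change (sum_f_R0 g (S (S (2*N+2)))) with (sum_f_R0 g (2*N+2) + g (S (2*N+2)) + g (S (S (2*N+2)))).
    change (sum_f_R0 (fun i => g (2*i+1)%nat + g (2*i+2)%nat) (S N)) with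
      (sum_f_R0 (fun i => g (2*i+1)%nat + g (2*i+2)%nat) N + (g (2*S N+1)%nat + g (2*S N+2)%nat)).
    rewrite IH.
    replace (S (2*N+2)) with (2 * S N + 1)%nat by lia.
    replace (S (2*N+2)) with (2 * S N + 1)%nat by lia.
    replace (S (2 * S N + 1)) with (2 * S N + 2)%nat by lia. lra.
Qed.

Lemma sum_nonneg (g : nat -> R) N : (forall i, 0 <= g i) -> 0 <= sum_f_R0 g N.
Proof.
  intros H; induction N; simpl; [apply H|]. specialize (H (S N)); lra.
Qed.

Lemma sum_ge_first (g : nat -> R) N : (forall i, 0 <= g i) -> g 0%nat <= sum_f_R0 g N.
Proof.
  intros H; induction N; simpl; [lra|]. specialize (H (S N)); lra.
Qed.

Lemma sum_zero (g : nat -> R) N : (forall i, g i = 0) -> sum_f_R0 g N = 0.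
Proof. intros H; induction N; simpl; rewrite ?IHN, H; lra. Qed.



Lemma sum_single (u : nat -> R) (b : nat) :
  (forall p, p <> b -> u p = 0) -> forall N, sum_f_R0 u N = if Nat.leb b N then u b else 0.
Proof.
  intros Hu N; induction N as [|N IH]; simpl.
  - destruct b; simpl; [reflexivity| apply Hu; lia].
  - rewrite IH. destruct (Nat.leb_spec b N), (Nat.leb_spec b (S N)); try lia.
    + rewrite (Hu (S N)) by lia; lra.
    + assert (b = S N) by lia; subst; lra.
    + rewrite (Hu (S N)) by lia; lra.
Qed.

Lemma is_series_single (u : nat -> R) (b : nat) :
  (forall p, p <> b -> u p = 0) -> is_series u (u b).
Proof.
  intros Hu.
  assert (H : is_lim_seq (sum_n u) (u b)).
  { apply (is_lim_seq_ext_loc (fun _ => u b)).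
    - exists b; intros N HN. rewrite sum_n_Reals, (sum_single u b Hu).
      destruct (Nat.leb_spec b N); [reflexivity| lia].
    - apply is_lim_seq_const. }
  exact H.
Qed.

Lemma Series_single (u : nat -> R) (b : nat) :
  (forall p, p <> b -> u p = 0) -> Series u = u b.
Proof. intros Hu; apply is_series_unique, is_series_single, Hu. Qed.



Lemma maxupto_nonneg F m p q : 0 <= maxupto F m p q.
Proof.
  induction m; simpl; [lra|]. pose proof (Rabs_pos (F (S m) p q)).
  pose proof (Rmax_r (maxupto F m p q) (Rabs (F (S m) p q))). lra.
Qed.

Lemma maxupto_ge F m N p q : (1 <= N <= m)%nat -> Rabs (F N p q) <= maxupto F m p q.
Proof.
  induction m; intros H; [lia|]. simpl.
  destruct (Nat.eq_dec N (S m)) as [->|E]; [apply Rmax_r|].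
  eapply Rle_trans; [apply IHm; lia| apply Rmax_l].
Qed.

Lemma maxupto_zero F m p q : (forall N, F N p q = 0) -> maxupto F m p q = 0.
Proof.
  intros H; induction m; simpl; [reflexivity|]. rewrite IHm, H, Rabs_R0.
  unfold Rmax; destruct (Rle_dec 0 0); lra.
Qed.

Lemma blocknorm_pairs f b : blocknorm f b =
  Rabs (f b 0%nat) + sum_f_R0 (fun i => Rabs (f b (2*i+1)%nat) + Rabs (f b (2*i+2)%nat)) b.
Proof. unfold blocknorm. apply (sum_pairs (fun j => Rabs (f b j))). Qed.

Lemma normY_single f b : (forall p q, p <> b -> f p q = 0) -> normY f = blocknorm f b.
Proof.
  intros H. unfold normY. apply Series_single. intros p Hp. unfold blocknorm.
  apply sum_zero. intros j. rewrite H by auto. apply Rabs_R0.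
Qed.

Lemma normY_zero f : (forall p q, f p q = 0) -> normY f = 0.
Proof.
  intros H. rewrite (normY_single f 0) by auto. unfold blocknorm. apply sum_zero.
  intros j. rewrite H. apply Rabs_R0.
Qed.

Lemma normY_scal f g k : (forall p q, g p q = k * f p q) -> normY g = Rabs k * normY f.
Proof.
  intros H. unfold normY. rewrite <- Series_scal_l. apply Series_ext. intros p.
  unfold blocknorm. rewrite scal_sum. apply sum_eq. intros j _.
  rewrite H, Rabs_mult. ring.
Qed.

Lemma lincomb_scal a k x N p q : lincomb (fun j => k * a j) x N p q = k * lincomb a x N p q.
Proof. induction N; simpl; [ring|]. rewrite IHN. ring. Qed.

Lemma lincomb_shift a x s N p q : lincomb a x (s + N) p q =
  lincomb a x s p q + lincomb (fun j => a (s + j)%nat) (fun j => x (s + j)%nat) N p q.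
Proof.
  induction N; simpl.
  - rewrite Nat.add_0_r. ring.
  - rewrite Nat.add_succ_r. simpl. rewrite IHN. ring.
Qed.

Lemma lincomb_q0 a N p : lincomb a useq N p 0%nat = 0.
Proof.
  destruct (Req_dec (lincomb a useq N p 0%nat) 0) as [E|E]; auto.
  apply lincomb_supp in E. lia.
Qed.



Lemma half_r i : /2 * r i = / (2 * (INR i + 1)).
Proof. rewrite r_def, plus_INR, Rinv_mult. simpl (INR 1). ring. Qed.

Lemma r_even i : r (2*i+2)%nat = / (2 * INR i + 3).
Proof. rewrite r_def. f_equal. rewrite !plus_INR, mult_INR. simpl. ring. Qed.

Lemma ineq_a x : 1 <= x -> / (2 * (x + 1)) - / (2 * x + 3) <= / x - / (x + 1).
Proof.
  intros Hx.
  replace (/ (2 * (x + 1)) - / (2 * x + 3)) with (/ ((2 * (x + 1)) * (2 * x + 3))) by (field; lra).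
  replace (/ x - / (x + 1)) with (/ (x * (x + 1))) by (field; lra).
  apply Rinv_le_contravar; nra.
Qed.

Lemma ineq_pos x : 1 <= x -> 0 <= / x - / (x + 1).
Proof.
  intros Hx. replace (/ x - / (x + 1)) with (/ (x * (x + 1))) by (field; lra).
  left; apply Rinv_0_lt_compat; nra.
Qed.

Definition beta (b i : nat) : R :=
  if Nat.eqb i 0 then 1 else (/ INR i - / INR (i + 1)) + 2 / INR (b + 1).

Lemma pair_bound b i : (1 <= b)%nat -> (i <= b)%nat ->
  Rabs (lincomb (c b) useq (T b + b) b (2*i+1)%nat) +
  Rabs (lincomb (c b) useq (T b + b) b (2*i+2)%nat) <= beta b i.
Proof.
  intros Hb Hi. rewrite CF_odd, CF_even by lia. unfold beta.
  assert (HB : 1 <= INR b) by (apply (le_INR 1); lia).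
  assert (H2b : 0 <= 2 / INR (b + 1)).
  { rewrite plus_INR; simpl (INR 1). apply Rlt_le, Rdiv_lt_0_compat; lra. }
  destruct (Nat.eqb_spec i 0) as [->|Hi0].
  - change (2*0+1)%nat with 1%nat; change (2*0+2)%nat with 2%nat;
    change (Nat.leb 1 0) with false; cbn [andb]. destruct (Nat.leb_spec 1 b); [|lia].
    replace (r 1) with (/2) by (rewrite r_def; simpl; f_equal; ring).
    destruct (Nat.leb_spec 2 b).
    + replace (r 2) with (/3) by (rewrite r_def; simpl; f_equal; ring).
      rewrite !Rminus_0_r, !Rabs_pos_eq by lra. lra.
    + rewrite !Rminus_0_r, Rabs_R0, Rabs_pos_eq by lra. lra.
  - destruct (Nat.leb_spec 1 i); [|lia]. destruct (Nat.leb_spec i b); [|lia]. simpl andb.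
    assert (Hx : 1 <= INR i) by (apply (le_INR 1); lia).
    rewrite r_odd, r_even, half_r.
    replace (INR (i + 1)) with (INR i + 1) by (rewrite plus_INR; simpl; ring).
    pose proof (ineq_pos (INR i) Hx).
    assert (P1 : 0 < / (2 * (INR i + 1))) by (apply Rinv_0_lt_compat; lra).
    destruct (Nat.leb_spec (2*i+1) b), (Nat.leb_spec (2*i+2) b).
    + replace (/ (2 * (INR i + 1)) - / (2 * (INR i + 1))) with 0 by ring.
      rewrite Rabs_R0. rewrite Rabs_left1.
      * pose proof (ineq_a (INR i) Hx). lra.
      * assert (/ (2 * INR i + 3) <= / (2 * (INR i + 1))) by (apply Rinv_le_contravar; lra). lra.
    + assert (E : b = (2*i+1)%nat) by lia.
      replace (/ (2 * (INR i + 1)) - / (2 * (INR i + 1))) with 0 by ring.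
      rewrite Rabs_R0, Rminus_0_l, Rabs_Ropp, Rabs_pos_eq by lra.
      assert (/ (2 * (INR i + 1)) <= 2 / INR (b + 1)).
      { rewrite E. replace (INR (2 * i + 1 + 1)) with (2 * (INR i + 1))
          by (rewrite !plus_INR, mult_INR; simpl; ring).
        unfold Rdiv. assert (0 < / (2 * (INR i + 1))) by (apply Rinv_0_lt_compat; lra). lra. }
      lra.
    + lia.
    + rewrite !Rminus_0_l, !Rabs_Ropp, Rabs_pos_eq by lra.
      assert (/ (2 * (INR i + 1)) + / (2 * (INR i + 1)) <= 2 / INR (b + 1)).
      { unfold Rdiv. replace (/ (2 * (INR i + 1)) + / (2 * (INR i + 1))) with (2 * / (2 * (INR i + 1))) by ring.
        apply Rmult_le_compat_l; [lra|]. apply Rinv_le_contravar.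
        - apply lt_0_INR; lia.
        - replace (INR (b + 1)) with (INR b + 1) by (rewrite plus_INR; simpl; ring).
          assert (INR b <= 2 * INR i) by (replace (2 * INR i) with (INR (2 * i)) by (rewrite mult_INR; simpl; ring); apply le_INR; lia).
          lra. }
      lra.
Qed.

Lemma beta_sum b N : sum_f_R0 (beta b) N <= 2 - / INR (N + 1) + 2 * INR N / INR (b + 1).
Proof.
  assert (Hb : 0 < INR (b + 1)) by (apply lt_0_INR; lia).
  induction N as [|N IH].
  - simpl. unfold beta; simpl. unfold Rdiv. rewrite Rmult_0_r, Rmult_0_l, Rinv_1. lra.
  - simpl sum_f_R0. unfold beta at 2. simpl Nat.eqb. cbv iota.
    replace (INR (S N)) with (INR N + 1) by (rewrite S_INR; ring).
    replace (INR (S N + 1)) with (INR N + 1 + 1) by (rewrite plus_INR, S_INR; simpl; ring).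
    replace (INR (N + 1)) with (INR N + 1) in IH by (rewrite plus_INR; simpl; ring).
    unfold Rdiv in *. lra.
Qed.



Definition Lfinal b := normY (lincomb (c b) useq (T b + b)).

Lemma L_bounds b : (1 <= b)%nat -> /2 <= Lfinal b <= 4.
Proof.
  intros Hb. unfold Lfinal.
  rewrite (normY_single _ b) by (intros; apply lincomb_off; auto).
  rewrite blocknorm_pairs, lincomb_q0, Rabs_R0, Rplus_0_l. split.
  - eapply Rle_trans; [|apply sum_ge_first; intros; apply Rplus_le_le_0_compat; apply Rabs_pos].
    rewrite CF_odd by lia. change (2*0+1)%nat with 1%nat. change (Nat.leb 1 0) with false.
    cbn [andb]. destruct (Nat.leb_spec 1 b); [|lia].
    replace (r 1) with (/2) by (rewrite r_def; simpl; f_equal; ring).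
    rewrite Rminus_0_r, (Rabs_pos_eq (/2)) by lra. pose proof (Rabs_pos (lincomb (c b) useq (T b + b) b (2 * 0 + 2)%nat)). lra.
  - eapply Rle_trans; [apply sum_Rle; intros; apply pair_bound; auto|].
    eapply Rle_trans; [apply beta_sum|].
    assert (0 < INR (b + 1)) by (apply lt_0_INR; lia).
    assert (INR b / INR (b + 1) <= 1).
    { unfold Rdiv. rewrite plus_INR. simpl (INR 1). apply (Rmult_le_reg_r (INR b + 1)); [rewrite plus_INR in H; simpl in H; lra|].
      rewrite Rmult_assoc, Rinv_l, Rmult_1_r, Rmult_1_l; [lra|]. rewrite plus_INR in H; simpl in H; lra. }
    assert (0 <= / INR (b + 1)) by (left; apply Rinv_0_lt_compat; auto).
    unfold Rdiv in *. nra.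
Qed.

Definition h (i : nat) : R := if Nat.eqb i 0 then 0 else /2 * r i.

Lemma ln_step y : 0 < y -> ln (y + 1) - ln y <= / y.
Proof.
  intros Hy. rewrite <- ln_div by lra.
  replace ((y + 1) / y) with (1 + / y) by (field; lra).
  left. rewrite <- (ln_exp (/ y)) at 2. apply ln_increasing.
  - assert (0 < / y) by (apply Rinv_0_lt_compat; auto). lra.
  - apply exp_ineq1. apply Rgt_not_eq, Rinv_0_lt_compat; auto.
Qed.

Lemma harm N : /2 * (ln (INR N + 2) - ln 2) <= sum_f_R0 h N.
Proof.
  induction N as [|N IH].
  - simpl. unfold h; simpl. replace (0 + 2) with 2 by ring. lra.
  - simpl sum_f_R0. unfold h at 2. simpl Nat.eqb. cbv iota.
    rewrite S_INR. rewrite r_def.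
    replace (INR (S N + 1)) with (INR N + 2) by (rewrite plus_INR, S_INR; simpl; ring).
    pose proof (ln_step (INR N + 2)) as HH.
    assert (0 <= INR N) by apply pos_INR.
    replace (INR N + 1 + 2) with (INR N + 2 + 1) by ring. specialize (HH ltac:(lra)). lra.
Qed.

Lemma h_nonneg i : 0 <= h i.
Proof. unfold h. destruct (Nat.eqb i 0); [lra|]. pose proof (r_pos i). lra. Qed.

Lemma big X : exists b, (1 <= b)%nat /\ X < sum_f_R0 h b.
Proof.
  destruct (INR_unbounded (exp (2 * X + ln 2))) as [n Hn].
  exists (S n). split; [lia|]. eapply Rlt_le_trans; [|apply harm].
  pose proof (exp_pos (2 * X + ln 2)).
  assert (ln (exp (2 * X + ln 2)) < ln (INR (S n) + 2)).
  { apply ln_increasing; auto. rewrite S_INR. lra. }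
  rewrite ln_exp in H0. lra.
Qed.

Lemma LB (G : nat -> Yvec) m b k : (1 <= b)%nat -> 0 <= k ->
  (forall N p q, p <> b -> G N p q = 0) ->
  (forall i, (1 <= i <= b)%nat -> exists N, (1 <= N <= m)%nat /\ Rabs (G N b (2*i+1)%nat) = k * (/2 * r i)) ->
  k * sum_f_R0 h b <= normY (maxupto G m).
Proof.
  intros Hb Hk Hoff Hw.
  rewrite (normY_single _ b) by (intros; apply maxupto_zero; intros; apply Hoff; auto).
  rewrite blocknorm_pairs. rewrite scal_sum.
  pose proof (Rabs_pos (maxupto G m b 0%nat)).
  cut (sum_f_R0 (fun i => h i * k) b <= sum_f_R0
    (fun i => Rabs (maxupto G m b (2 * i + 1)%nat) + Rabs (maxupto G m b (2 * i + 2)%nat)) b); [lra|].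
  apply sum_Rle. intros i Hi.
  pose proof (Rabs_pos (maxupto G m b (2 * i + 2)%nat)).
  rewrite (Rabs_pos_eq (maxupto G m b (2 * i + 1)%nat)) by apply maxupto_nonneg.
  unfold h. destruct (Nat.eqb_spec i 0).
  - pose proof (maxupto_nonneg G m b (2*i+1)%nat). lra.
  - destruct (Hw i ltac:(lia)) as [N [HN HE]].
    pose proof (maxupto_ge G m N b (2*i+1)%nat HN). lra.
Qed.



Lemma witness_val b i : (1 <= b)%nat -> (1 <= i <= b)%nat ->
  lincomb (c b) useq (T b + i) b (2*i+1)%nat = - (/2 * r i).
Proof.
  intros Hb Hi. rewrite CF_odd by lia.
  destruct (Nat.leb_spec (2*i+1) i); [lia|].
  destruct (Nat.leb_spec 1 i), (Nat.leb_spec i i); try lia. simpl. ring.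
Qed.

Lemma not_bibasic : ~ bibasic useq.
Proof.
  intros [_ [M [HM H]]].
  destruct (big (4 * M)) as [b [Hb Hbig]].
  specialize (H (T b + b)%nat (c b)).
  assert (HL := L_bounds b Hb). unfold Lfinal in HL.
  assert (HLB : 1 * sum_f_R0 h b <= normY (maxupto (fun n => lincomb (c b) useq n) (T b + b))).
  { apply LB; auto; [lra| |].
    - intros; apply lincomb_off; auto.
    - intros i Hi. exists (T b + i)%nat. split; [lia|].
      rewrite witness_val by auto. rewrite Rabs_Ropp, Rabs_pos_eq; [ring|].
      pose proof (r_pos i); lra. }
  nra.
Qed.

Lemma not_uqg : ~ uniformly_quasi_greedy useq.
Proof.
  intros [C H].
  destruct (big (4 * C)) as [b [Hb Hbig]].
  assert (HL := L_bounds b Hb). set (L := Lfinal b) in *.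
  assert (HLpos : 0 < L) by lra.
  set (a := fun k => / L * c b k).
  set (xv := lincomb a useq (T b + b)).
  set (rho := fun j => (T b + j)%nat).
  assert (Hxv : forall p q, xv p q = / L * lincomb (c b) useq (T b + b) p q).
  { intros; unfold xv, a; apply lincomb_scal. }
  assert (Hgr : forall N p q, greedy_sum useq a rho N p q = / L * lincomb (c b) useq (T b + N) p q).
  { intros N p q. unfold greedy_sum, rho.
    transitivity (lincomb a useq (T b + N) p q).
    - rewrite lincomb_shift.
      assert (E : lincomb a useq (T b) p q = 0).
      { unfold a. rewrite lincomb_scal, lincomb_below by lia. ring. }
      rewrite E. ring.
    - unfold a. apply lincomb_scal. }
  assert (Hex : expansion useq a xv).
  { split; [split|].
    - intros n j Hnj. destruct (Req_dec (xv n j) 0) as [E|E]; auto.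
      apply lincomb_supp in E. lia.
    - exists (blocknorm xv b). apply is_series_single. intros p Hp.
      unfold blocknorm. apply sum_zero. intros j. rewrite Hxv, lincomb_off by auto.
      rewrite Rmult_0_r. apply Rabs_R0.
    - apply (is_lim_seq_ext_loc (fun _ => 0)); [|apply is_lim_seq_const].
      exists (T b + b)%nat. intros N HN. symmetry. apply normY_zero. intros p q.
      unfold subY. unfold a. rewrite lincomb_scal, lincomb_above by lia. rewrite Hxv. ring. }
  assert (Hn1 : normY xv = 1).
  { rewrite (normY_scal (lincomb (c b) useq (T b + b)) xv (/ L)) by apply Hxv.
    fold (Lfinal b). fold L. rewrite Rabs_pos_eq by (left; apply Rinv_0_lt_compat; auto).
    field. lra. }
  assert (Hgo : greedy_ordering a rho).
  { unfold rho. split; [|split].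
    - intros i j E; lia.
    - intros k Hk. unfold a in Hk.
      destruct (Nat.lt_ge_cases k (T b)). { rewrite c_out in Hk by lia. lra. }
      destruct (Nat.lt_ge_cases k (T b + b)). 2: { rewrite c_out in Hk by lia. lra. }
      exists (k - T b)%nat. lia.
    - intros i j Hij. unfold a.
      assert (HiL : 0 < / L) by (apply Rinv_0_lt_compat; auto).
      destruct (Nat.lt_ge_cases j b).
      + left. rewrite !c_T by lia. rewrite !Rabs_mult, !(Rabs_pos_eq (/ L)) by lra.
        rewrite !Rabs_pos_eq by (left; apply r_pos).
        apply Rmult_lt_compat_l; auto. rewrite !r_def. apply Rinv_lt_contravar.
        * apply Rmult_lt_0_compat; apply lt_0_INR; lia.
        * apply lt_INR; lia.
      + rewrite (c_out b (T b + j)) by lia. rewrite Rmult_0_r, Rabs_R0.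
        destruct (Nat.lt_ge_cases i b).
        * left. rewrite c_T by lia. rewrite Rabs_mult. apply Rmult_lt_0_compat.
          -- rewrite Rabs_pos_eq; lra.
          -- rewrite Rabs_pos_eq; [apply r_pos| left; apply r_pos].
        * right. rewrite (c_out b (T b + i)) by lia. rewrite Rmult_0_r, Rabs_R0. split; [reflexivity| lia]. }
  specialize (H a xv rho b Hex Hn1 Hgo).
  assert (HLB : / L * sum_f_R0 h b <= normY (maxupto (greedy_sum useq a rho) b)).
  { apply LB; auto; [left; apply Rinv_0_lt_compat; auto| |].
    - intros N p q Hp. rewrite Hgr, lincomb_off by auto. ring.
    - intros i Hi. exists i. split; [lia|].
      rewrite Hgr, witness_val by auto. rewrite Rabs_mult, Rabs_Ropp, !Rabs_pos_eq; [ring| |].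
      + pose proof (r_pos i); lra.
      + left; apply Rinv_0_lt_compat; auto. }
  assert (Hs : 0 <= sum_f_R0 h b) by (apply sum_nonneg, h_nonneg).
  assert (/4 <= / L) by (apply Rinv_le_contravar; lra).
  nra.
Qed.

Theorem proposition4p1 : ~ uniformly_quasi_greedy useq /\ ~ bibasic useq.
Proof. split; [apply not_uqg | apply not_bibasic]. Qed.
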